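(* Assume: (A1) $f(x,y)$ and each component of $g(x,y)$ are convex in $y$ for each fixed $x$, and $f,g$ are twice continuously differentiable; (A2) $Y\subseteq\mathbb{R}^m$ is a compact convex set with $\{y:\exists x\in X \text{ such that } g(x,y)\le 0\}\subseteq\mathrm{int}(Y)$; (R1) for each $x\in X$ there exists $y$ with $g(x,y)<0$. Then for every $x\in X$: the set $\arg\max_\lambda\{\psi(\lambda,x) : \lambda\ge 0\}$ is nonempty and compact, $\max_\lambda\{h(\lambda,x):\lambda\ge 0\}=\max_\lambda\{\psi(\lambda,x):\lambda\ge0\}$, and $\arg\max_\lambda\{h(\lambda,x):\lambda\ge 0\}=\arg\max_\lambda\{\psi(\lambda,x):\lambda\ge 0\}$.
   Context: Let $f:\mathbb{R}^n\times\mathbb{R}^m\to\mathbb{R}$, $g:\mathbb{R}^n\times\mathbb{R}^m\to\mathbb{R}^p$, $G:\mathbb{R}^n\to\mathbb{R}^q$; vector inequalities are componentwise. $X=\{x\in\mathbb{R}^n: G(x)\le 0\}$. For $\lambda\in\mathbb{R}^p$, the Lagrangian dual function is $\psi(\lambda,x)=\inf_{y\in\mathbb{R}^m}\{f(x,y)+\lambda^{\mathsf T}g(x,y)\}$ (possibly $-\infty$), and the constrained Lagrangian dual function is $h(\lambda,x)=\min_{y}\{f(x,y)+\lambda^{\mathsf T}g(x,y) : y\in Y\}$, with $Y$ the set from (A2). *)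

(* Defs.v *)
From HB Require Import structures.
From mathcomp Require Import all_boot all_order all_algebra.
From mathcomp Require Import all_classical all_reals all_analysis.
Set Implicit Arguments. Unset Strict Implicit. Unset Printing Implicit Defensive.
Import Order.TTheory GRing.Theory Num.Theory.
Import numFieldNormedType.Exports.
Local Open Scope classical_set_scope.
Local Open Scope ring_scope.

Definition basis_vec (R : realType) (k : nat) (i : 'I_k) : 'rV[R]_k :=
  delta_mx 0 i.

Definition C2 (R : realType) (k : nat) (F : 'rV[R]_k -> R) : Prop :=
  continuous F /\
  forall i : 'I_k,
    (forall z, derivable F z (basis_vec R i)) /\
    continuous (fun z => 'D_(basis_vec R i) F z) /\
    forall j : 'I_k,
      (forall z, derivable (fun w => 'D_(basis_vec R i) F w) z (basis_vec R j)) /\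
      continuous (fun z => 'D_(basis_vec R j) (fun w => 'D_(basis_vec R i) F w) z).

Definition uncurry_rv (R : realType) (n m : nat) (F : 'rV[R]_n -> 'rV[R]_m -> R)
  : 'rV[R]_(n + m) -> R := fun z => F (lsubmx z) (rsubmx z).

Definition convex_fun (R : realType) (m : nat) (F : 'rV[R]_m -> R) : Prop :=
  forall (a b : 'rV[R]_m) (t : R), 0 <= t -> t <= 1 ->
    F (t *: a + (1 - t) *: b) <= t * F a + (1 - t) * F b.

Definition convex_set_rv (R : realType) (m : nat) (Y : set 'rV[R]_m) : Prop :=
  forall (a b : 'rV[R]_m) (t : R), Y a -> Y b -> 0 <= t -> t <= 1 ->
    Y (t *: a + (1 - t) *: b).

Definition feasX (R : realType) (n q : nat) (G : 'rV[R]_n -> 'rV[R]_q)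
  : set 'rV[R]_n := [set x | forall i : 'I_q, G x 0 i <= 0].

Definition lagr (R : realType) (n m p : nat) (f : 'rV[R]_n -> 'rV[R]_m -> R)
  (g : 'rV[R]_n -> 'rV[R]_m -> 'rV[R]_p) (lam : 'rV[R]_p) (x : 'rV[R]_n)
  (y : 'rV[R]_m) : R :=
  f x y + \sum_(i < p) lam 0 i * g x y 0 i.

Definition psi (R : realType) (n m p : nat) (f : 'rV[R]_n -> 'rV[R]_m -> R)
  (g : 'rV[R]_n -> 'rV[R]_m -> 'rV[R]_p) (lam : 'rV[R]_p) (x : 'rV[R]_n)
  : \bar R :=
  ereal_inf [set (lagr f g lam x y)%:E | y in [set: 'rV[R]_m]].

(* constrained dual function h(lambda,x) = min_{y in Y} (the min is attained
   under the hypotheses; we define it as the infimum over Y) *)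
Definition hdual (R : realType) (n m p : nat) (f : 'rV[R]_n -> 'rV[R]_m -> R)
  (g : 'rV[R]_n -> 'rV[R]_m -> 'rV[R]_p) (Y : set 'rV[R]_m) (lam : 'rV[R]_p)
  (x : 'rV[R]_n) : \bar R :=
  ereal_inf [set (lagr f g lam x y)%:E | y in Y].

Definition nonneg_rv (R : realType) (p : nat) : set 'rV[R]_p :=
  [set lam | forall i : 'I_p, 0 <= lam 0 i].

Definition argmax_nonneg (R : realType) (p : nat) (phi : 'rV[R]_p -> \bar R)
  : set 'rV[R]_p :=
  [set lam | @nonneg_rv R p lam /\
             forall mu, @nonneg_rv R p mu -> (phi mu <= phi lam)%E].

(* Main.v *)
Require Import Defs.
From HB Require Import structures.
From mathcomp Require Import all_boot all_order all_algebra.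
From mathcomp Require Import all_classical all_reals all_analysis.
From mathcomp Require Import ring lra.

Import Order.TTheory GRing.Theory Num.Theory.
Import numFieldNormedType.Exports.
Set Implicit Arguments. Unset Strict Implicit. Unset Printing Implicit Defensive.
Local Open Scope classical_set_scope.
Local Open Scope ring_scope.

Section Gordan.
Variables (R : realType) (V : lmodType R).

Definition convD (D : set V) := forall a b (t : R), D a -> D b -> 0 <= t -> t <= 1 ->
  D (t *: a + (1 - t) *: b).
Definition convon (D : set V) (F : V -> R) := forall a b (t : R), D a -> D b ->
  0 <= t -> t <= 1 -> F (t *: a + (1 - t) *: b) <= t * F a + (1 - t) * F b.

Lemma two_fun (D : set V) (F1 F2 : V -> R) : convD D -> convon D F1 -> convon D F2 ->
  (forall y, D y -> ~ (F1 y < 0 /\ F2 y < 0)) ->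
  exists t : R, 0 <= t /\ t <= 1 /\ forall y, D y -> 0 <= t * F1 y + (1 - t) * F2 y.
Proof.
move=> cD c1 c2 nb.
have nb' y : D y -> F1 y < 0 -> 0 <= F2 y.
  by move=> Dy h; rewrite leNgt; apply/negP => h2; exact: (nb y Dy).
have nb'' y : D y -> F2 y < 0 -> 0 <= F1 y.
  by move=> Dy h; rewrite leNgt; apply/negP => h2; exact: (nb y Dy).
pose A := [set s : R | s = 0 \/ exists y, D y /\ F2 y < F1 y /\ s * (F1 y - F2 y) = - F2 y].
have A1 s : A s -> s <= 1.
  case=> [->|[y [Dy [h1 h2]]]]; first lra.
  have P0 : 0 <= F1 y.
    rewrite leNgt; apply/negP => h; have := nb' y Dy h; lra.
  nra.
have K s z : A s -> D z -> F1 z < F2 z -> s * (F2 z - F1 z) <= F2 z.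
  move=> As Dz hz; case: As => [->|[y [Dy [h1 h2]]]].
    rewrite mul0r; rewrite leNgt; apply/negP => h; have := nb'' z Dz h; lra.
  rewrite leNgt; apply/negP => hc.
  set P := F1 y in h1 h2; set U := F2 y in h1 h2; set Q := F1 z in hz hc; set W := F2 z in hz hc.
  have key : W * P < Q * U.
    have hPU : 0 < P - U by lra.
    have : s * (W - Q) * (P - U) > W * (P - U) by rewrite ltr_pM2r.
    nra.
  pose al := W - Q; pose be := P - U.
  have al0 : 0 < al by rewrite /al; lra.
  have be0 : 0 < be by rewrite /be; lra.
  pose t := al / (al + be).
  have ht : t * (al + be) = al by rewrite /t mulfVK //; apply: lt0r_neq0; lra.
  have t0 : 0 <= t by rewrite /t divr_ge0 //; lra.
  have t1 : t <= 1 by rewrite /t ler_pdivrMr; lra.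
  have Dw := cD y z t Dy Dz t0 t1.
  have e1 := c1 y z t Dy Dz t0 t1.
  have e2 := c2 y z t Dy Dz t0 t1.
  apply: (nb _ Dw); split.
    apply: (le_lt_trans e1); rewrite -/P -/Q.
    have : (al + be) * (t * P + (1 - t) * Q) = W * P - Q * U.
      have -> : (al + be) * (t * P + (1 - t) * Q) = (t * (al + be)) * P + (al + be) * Q - (t * (al + be)) * Q by ring.
      rewrite ht /al /be; ring.
    move=> h; rewrite -(pmulr_rlt0 _ (_ : 0 < al + be)) ?h; lra.
  apply: (le_lt_trans e2); rewrite -/U -/W.
  have : (al + be) * (t * U + (1 - t) * W) = W * P - Q * U.
    have -> : (al + be) * (t * U + (1 - t) * W) = (t * (al + be)) * U + (al + be) * W - (t * (al + be)) * W by ring.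
    rewrite ht /al /be; ring.
  move=> h; rewrite -(pmulr_rlt0 _ (_ : 0 < al + be)) ?h; lra.
have A0 : A 0 by left.
have hs : has_sup A by split; [exists 0 | exists 1 => s /A1].
exists (sup A); split; first exact: sup_upper_bound.
split; first by apply: ge_sup; [exists 0|move=> s /A1].
move=> y Dy.
have [h|h|h] := ltgtP (F1 y) (F2 y).
- have : sup A <= F2 y / (F2 y - F1 y).
    apply: ge_sup; first by exists 0.
    move=> s As; rewrite ler_pdivlMr; last lra.
    exact: K.
  rewrite ler_pdivlMr; last lra.
  nra.
- have Aa : A (- F2 y / (F1 y - F2 y)).
    right; exists y; split => //; split => //.
    rewrite mulfVK //; apply: lt0r_neq0; lra.
  have := sup_upper_bound hs Aa; rewrite ler_pdivrMr; last lra.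
  nra.
- rewrite h. have := nb' y Dy; have := nb'' y Dy. rewrite h. nra.
Qed.

Lemma convon_comb (D : set V) k (c0 : R) (c : 'I_k -> R) (f0 : V -> R) (g : 'I_k -> V -> R) :
  0 <= c0 -> (forall i, 0 <= c i) -> convon D f0 -> (forall i, convon D (g i)) ->
  convon D (fun y => c0 * f0 y + \sum_i c i * g i y).
Proof.
move=> c00 c0i cf cg a b t Da Db t0 t1.
have e : t * (c0 * f0 a + \sum_i c i * g i a) + (1 - t) * (c0 * f0 b + \sum_i c i * g i b)
  = c0 * (t * f0 a + (1 - t) * f0 b) + \sum_i c i * (t * g i a + (1 - t) * g i b).
  rewrite !mulrDr !mulr_sumr -!addrA; congr (_ + _); first ring.
  rewrite addrCA; congr (_ + _); first ring.
  rewrite -big_split /=; apply: eq_bigr => i _; ring.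
rewrite e; apply: lerD; first by rewrite ler_wpM2l //; exact: cf.
apply: ler_sum => i _; rewrite ler_wpM2l //; exact: cg.
Qed.

Lemma lift_widen k (j : 'I_k) : lift ord_max j = widen_ord (leqnSn k) j.
Proof. by apply: val_inj; rewrite /= /bump leqNgt ltn_ord. Qed.

Lemma gordan k : forall (D : set V) (f0 : V -> R) (g : 'I_k -> V -> R),
  convD D -> convon D f0 -> (forall i, convon D (g i)) ->
  (forall y, D y -> ~ (f0 y < 0 /\ forall i, g i y < 0)) ->
  exists (mu0 : R) (mu : 'I_k -> R), 0 <= mu0 /\ (forall i, 0 <= mu i) /\
    mu0 + \sum_i mu i = 1 /\ forall y, D y -> 0 <= mu0 * f0 y + \sum_i mu i * g i y.
Proof.
elim: k => [|k IH] D f0 g cD cf cg nb.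
  exists 1, (fun _ => 0); split => //; split => //; split; first by rewrite big_ord0 addr0.
  move=> y Dy; rewrite big_ord0 addr0 mul1r leNgt; apply/negP => h.
  by apply: (nb y Dy); split => // -[].
pose D' := D `&` [set y | g ord_max y < 0].
pose g' := fun i : 'I_k => g (widen_ord (leqnSn k) i).
have cD' : convD D'.
  move=> a b t [Da ha] [Db hb] t0 t1; split; first exact: cD.
  apply: (le_lt_trans (cg _ _ _ _ Da Db t0 t1)).
  have [->|tp] := eqVneq t 0; first by rewrite mul0r add0r subr0 mul1r.
  have tp' : 0 < t by rewrite lt_neqAle eq_sym tp.
  have ha' : g ord_max a < 0 := ha.
  have hb' : g ord_max b < 0 := hb.
  nra.
have [mu0' [mu' [h0 [h1 [h2 h3]]]]] : exists (mu0 : R) (mu : 'I_k -> R), 0 <= mu0 /\ (forall i, 0 <= mu i) /\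
    mu0 + \sum_i mu i = 1 /\ forall y, D' y -> 0 <= mu0 * f0 y + \sum_i mu i * g' i y.
  apply: IH => //.
  - by move=> a b t [Da _] [Db _] t0 t1; apply: cf.
  - by move=> i a b t [Da _] [Db _] t0 t1; apply: cg.
  move=> y [Dy hy] [hf hg]; apply: (nb y Dy); split => // i.
  have [j ->|->] := unliftP ord_max i; last exact: hy.
  by have := hg j; rewrite /g' lift_widen.
have nb2 : forall y, D y -> ~ (mu0' * f0 y + \sum_i mu' i * g' i y < 0 /\ g ord_max y < 0).
  by move=> y Dy [hA hB]; have := h3 y (conj Dy hB); rewrite leNgt hA.
have [t [t0 [t1 ht]]] := @two_fun D (fun y => mu0' * f0 y + \sum_i mu' i * g' i y) (g ord_max) cD
  (convon_comb h0 h1 cf (fun i => cg _)) (cg ord_max) nb2.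
pose mu := fun i : 'I_k.+1 => if unlift ord_max i is Some j then t * mu' j else 1 - t.
have sumE (F : 'I_k.+1 -> R) : \sum_i F i = \sum_(j < k) F (lift ord_max j) + F ord_max.
  rewrite big_ord_recr /=; congr (_ + _); apply: eq_bigr => j _; by rewrite lift_widen.
have muL (j : 'I_k) : mu (lift ord_max j) = t * mu' j by rewrite /mu liftK.
have muM : mu ord_max = 1 - t by rewrite /mu unlift_none.
have g'E j : g' j = g (lift ord_max j).
  by rewrite /g' lift_widen.
exists (t * mu0'), mu; split; first exact: mulr_ge0.
split.
  move=> i; rewrite /mu; case: (unlift ord_max i) => [j|]; first exact: mulr_ge0.
  by rewrite subr_ge0.
split.
  rewrite sumE muM; under eq_bigr do rewrite muL.
  by rewrite -mulr_sumr addrA -mulrDr h2 mulr1 addrC subrK.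
move=> y Dy; rewrite sumE muM; under eq_bigr do rewrite muL -g'E.
have -> : t * mu0' * f0 y + (\sum_(j<k) t * mu' j * g' j y + (1-t) * g ord_max y) = t * (mu0' * f0 y + \sum_i mu' i * g' i y) + (1 - t) * g ord_max y.
  rewrite mulrDr mulr_sumr !addrA; congr (_ + _ + _); [ring | apply: eq_bigr => i _; ring].
exact: ht.
Qed.
End Gordan.
Lemma row_mx_cont (R : realType) n m (x : 'rV[R]_n) :
  continuous (fun y : 'rV[R]_m => row_mx x y).
Proof.
move=> y A /nbhs_ballP [e e0 hA]; apply/nbhs_ballP; exists e => // z hz; apply: hA.
move: hz; rewrite /ball /= => -[_ hz]; split => // i j.
rewrite -(fintype.splitK j); case: (fintype.split j) => k /=; rewrite ?row_mxEl ?row_mxEr; last exact: hz.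
exact: ballxx.
Qed.

Lemma lagr_cont (R : realType) n m p (f : 'rV[R]_n -> 'rV[R]_m -> R)
  (g : 'rV[R]_n -> 'rV[R]_m -> 'rV[R]_p) x y :
  continuous (fun lam : 'rV[R]_p => lagr f g lam x y).
Proof.
move=> lam; rewrite /lagr.
apply: (@continuousD _ _ _ (fun=> f x y) (fun lam : 'rV[R]_p => \sum_(i < p) lam 0 i * g x y 0 i)).
  exact: cst_continuous.
apply: (@continuous_big _ _ +%R 0 xpredT _ _ (index_enum _) (fun i (l : 'rV[R]_p) => l 0 i * g x y 0 i)).
  exact: add_continuous.
move=> i _ l; apply: continuousM; [exact: coord_continuous | exact: cst_continuous].
Qed.

Unset Implicit Arguments. Set Strict Implicit.

Theorem theorem1 (R : realType) (n m p q : nat)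
  (f : 'rV[R]_n -> 'rV[R]_m -> R)
  (g : 'rV[R]_n -> 'rV[R]_m -> 'rV[R]_p)
  (G : 'rV[R]_n -> 'rV[R]_q)
  (Y : set 'rV[R]_m)
  (* (A1) *)
  (Hfconv : forall x, convex_fun (f x))
  (Hgconv : forall x (i : 'I_p), convex_fun (fun y => g x y 0 i))
  (HfC2 : C2 (uncurry_rv f))
  (HgC2 : forall i : 'I_p, C2 (uncurry_rv (fun x y => g x y 0 i)))
  (* (A2) *)
  (HYcomp : compact Y) (HYconv : convex_set_rv Y)
  (HYint : [set y | exists x, feasX G x /\ forall i : 'I_p, g x y 0 i <= 0]
             `<=` interior Y)
  (* (R1) *)
  (HSlater : forall x, feasX G x -> exists y, forall i : 'I_p, g x y 0 i < 0) :
  forall x, feasX G x ->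
    argmax_nonneg (fun lam => psi f g lam x) !=set0 /\
    compact (argmax_nonneg (fun lam => psi f g lam x)) /\
    ereal_sup [set hdual f g Y lam x | lam in @nonneg_rv R p] =
      ereal_sup [set psi f g lam x | lam in @nonneg_rv R p] /\
    argmax_nonneg (fun lam => hdual f g Y lam x) =
      argmax_nonneg (fun lam => psi f g lam x).
Proof.
move=> x hx.
have cF : continuous (fun y => f x y).
  have -> : (fun y => f x y) = (uncurry_rv f) \o (fun y => row_mx x y).
    by apply: funext => z; rewrite /= /uncurry_rv row_mxKl row_mxKr.
  move=> y; apply: continuous_comp; [exact: row_mx_cont | exact: HfC2.1].
have cG i : continuous (fun y => g x y 0 i).
  have -> : (fun y => g x y 0 i) = (uncurry_rv (fun x y => g x y 0 i)) \o (fun y => row_mx x y).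
    by apply: funext => z; rewrite /= /uncurry_rv row_mxKl row_mxKr.
  move=> y; apply: continuous_comp; [exact: row_mx_cont | exact: (HgC2 i).1].
pose S := [set y | forall i : 'I_p, g x y 0 i <= 0].
have SY : S `<=` interior Y by move=> y hy; apply: HYint; exists x.
have SY' : S `<=` Y := fun y hy => interior_subset (SY y hy).
have clS : closed S.
  have -> : S = \bigcap_(i in [set: 'I_p]) ((fun y => g x y 0 i) @^-1` [set r | r <= 0]).
    by apply/seteqP; split => y /= h i; [move=> _; apply: h | apply: h].
  apply: closed_bigI => i _; apply: preimage_closed; [move=> y _; exact: cG | exact: closed_le].
have cS : compact S := subclosed_compact clS HYcomp SY'.
have [yh hyh] := HSlater x hx.
have S0 : S !=set0 by exists yh => i; exact: ltW.
have [ys ysS ysmin] := compact_EVT_min S0 cS (continuous_subspaceT cF).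
have {}ysS : S ys by rewrite inE in ysS.
have {}ysmin : forall y, S y -> f x ys <= f x y by move=> y hy; apply: ysmin; rewrite inE.
pose v := f x ys.
have Lys lam : nonneg_rv lam -> lagr f g lam x ys <= v.
  move=> hl; rewrite /lagr gerDl; apply: sumr_le0 => i _.
  exact: mulr_ge0_le0 (hl i) (ysS i).
have convL lam : nonneg_rv lam -> convon setT (fun y => lagr f g lam x y).
  move=> hl; have := @convon_comb R _ setT p 1 (fun i => lam 0 i) (fun y => f x y)
    (fun i y => g x y 0 i) ler01 hl (fun a b t _ _ => Hfconv x a b t)
    (fun i a b t _ _ => Hgconv x i a b t).
  move=> h a b t _ _ t0 t1; have := h a b t I I t0 t1.
  by rewrite /lagr !mul1r.
have [mu0 [mu [mu00 [mu0i [musum mupos]]]]] :=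
  @gordan R _ p setT (fun y => f x y - v) (fun i y => g x y 0 i)
    (fun _ _ _ _ _ _ _ => I)
    (fun a b t _ _ t0 t1 => ltac:(have := Hfconv x a b t t0 t1; lra))
    (fun i a b t _ _ => Hgconv x i a b t)
    (fun y _ '(conj h1 h2) => ltac:(have := ysmin y (fun i => ltW (h2 i)); rewrite -/v; lra)).
have mu0p : 0 < mu0.
  rewrite lt_neqAle mu00 andbT. apply/eqP => h0.
  rewrite -h0 add0r in musum.
  have [i mui] : exists i, mu i != 0.
    apply: contrapT => hn.
    have : \sum_i mu i = 0.
      by apply: big1 => i _; apply/eqP; apply: contra_notT hn => hi; exists i.
    by rewrite musum => /eqP; rewrite oner_eq0.
  have := mupos yh I; rewrite -h0 mul0r add0r (bigD1 i) //=.
  have h1 : \sum_(j | j != i) mu j * g x yh 0 j <= 0.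
    by apply: sumr_le0 => j _; apply: mulr_ge0_le0 (mu0i j) (ltW (hyh j)).
  have h2 : mu i * g x yh 0 i < 0.
    by rewrite pmulr_rlt0 // lt_neqAle eq_sym mui mu0i.
  lra.
pose lam0 := \row_(i < p) (mu i / mu0).
have lam0nn : nonneg_rv lam0 by move=> i; rewrite mxE divr_ge0.
have lam0L y : v <= lagr f g lam0 x y.
  have := mupos y I.
  have -> : mu0 * (f x y - v) + \sum_i mu i * g x y 0 i = mu0 * (lagr f g lam0 x y - v).
    have e : \sum_i mu i * g x y 0 i = mu0 * \sum_i lam0 0 i * g x y 0 i.
      rewrite mulr_sumr; apply: eq_bigr => i _; rewrite mxE mulrA mulrCA mulfV ?mulr1 //.
      exact: lt0r_neq0.
    rewrite e /lagr; ring.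
  by rewrite pmulr_rge0 // subr_ge0.
have psi_ge lam : (v%:E <= psi f g lam x)%E <-> (forall y, v <= lagr f g lam x y).
  split => [h y | h].
    rewrite -lee_fin; apply: (le_trans h); apply: ereal_inf_lbound; by exists y.
  by apply/ereal_infP => _ [y _ <-]; rewrite lee_fin; exact: h.
have psi_le lam : nonneg_rv lam -> (psi f g lam x <= v%:E)%E.
  move=> hl; apply: (@le_trans _ _ (lagr f g lam x ys)%:E).
    by apply: ereal_inf_lbound; exists ys.
  by rewrite lee_fin; exact: Lys.
have h_le lam : nonneg_rv lam -> (hdual f g Y lam x <= v%:E)%E.
  move=> hl; apply: (@le_trans _ _ (lagr f g lam x ys)%:E).
    by apply: ereal_inf_lbound; exists ys => //; exact: SY'.
  by rewrite lee_fin; exact: Lys.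
have psi_le_h lam : (psi f g lam x <= hdual f g Y lam x)%E.
  by apply/ereal_infP => _ [y _ <-]; apply: ereal_inf_lbound; exists y.
have key lam : nonneg_rv lam -> (v%:E <= hdual f g Y lam x)%E ->
    forall y, v <= lagr f g lam x y.
  move=> hl hh y.
  have hY w : Y w -> v <= lagr f g lam x w.
    move=> Yw; rewrite -lee_fin; apply: (le_trans hh); apply: ereal_inf_lbound; by exists w.
  have /nbhs_ballP [e e0 hb] := SY ys ysS.
  pose N := `|ys - y|.
  have N0 : 0 <= N := normr_ge0 _.
  have e0' : 0 < e := e0.
  pose s := e / (e + N).
  have s0 : 0 < s by rewrite /s divr_gt0 //; lra.
  have s1 : s <= 1 by rewrite /s ler_pdivrMr; lra.
  have Yw : Y (s *: y + (1 - s) *: ys).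
    apply: hb; rewrite -ball_normE /ball_ /=.
    have -> : ys - (s *: y + (1 - s) *: ys) = s *: (ys - y).
      by rewrite scalerBl scale1r scalerBr opprD opprB addrA addrC addrA subrK.
    rewrite normrZ ger0_norm ?ltW // /s mulrAC ltr_pdivrMr; last lra.
    rewrite -/N; nra.
  have := convL lam hl y ys s I I (ltW s0) s1.
  have := hY _ Yw; have := Lys lam hl.
  nra.
pose M := [set lam | nonneg_rv lam /\ forall y, v <= lagr f g lam x y].
have lam0M : M lam0 by [].
have AP : argmax_nonneg (fun lam => psi f g lam x) = M.
  apply/seteqP; split => lam [hl h]; split => //.
    by apply/psi_ge; apply: le_trans (h lam0 lam0nn); apply/psi_ge.
  by move=> mu1 hmu; apply: le_trans (psi_le mu1 hmu) _; apply/psi_ge.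
have AH : argmax_nonneg (fun lam => hdual f g Y lam x) = M.
  apply/seteqP; split => lam [hl h]; split => //.
    apply: key hl _; apply: le_trans (h lam0 lam0nn).
    by apply: le_trans (psi_le_h lam0); apply/psi_ge.
  move=> mu1 hmu; apply: le_trans (h_le mu1 hmu) _.
  by apply: le_trans (psi_le_h lam); apply/psi_ge.
rewrite AH AP; split; first by exists lam0.
split.
  apply: bounded_closed_compact.
    pose c := f x yh - v.
    pose B := \sum_(k < p) `|c / (- g x yh 0 k)|.
    have B0 : 0 <= B by apply: sumr_ge0 => k _.
    have entB lam : M lam -> forall j, lam 0 j <= B.
      move=> [hl h] j; have := h yh; rewrite /lagr (bigD1 j) //=.
      have h1 : \sum_(i | i != j) lam 0 i * g x yh 0 i <= 0.
        by apply: sumr_le0 => i _; apply: mulr_ge0_le0 (hl i) (ltW (hyh i)).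
      move=> hv.
      have gj : 0 < - g x yh 0 j by rewrite oppr_gt0.
      have : lam 0 j <= c / (- g x yh 0 j).
        rewrite ler_pdivlMr // /c; nra.
      move/le_trans; apply; apply: (le_trans (ler_norm _)).
      rewrite /B (bigD1 j) //= lerDl; exact: sumr_ge0.
    have nB lam : M lam -> `|lam| <= B.
      move=> hM; rewrite /Num.norm /= mx_normrE; apply: bigmax_le => // -[i j] _ /=.
      rewrite (ord1 i) ger0_norm; [exact: entB | exact: hM.1].
    rewrite /bounded_near; apply: filterS (nbhs_pinfty_ge (num_real B)) => r Br lam hlam.
    exact: le_trans (nB lam hlam) Br.
  have -> : M = nonneg_rv (p:=p) `&` \bigcap_(y in [set: 'rV[R]_m])
      ((fun lam => lagr f g lam x y) @^-1` [set r | v <= r]).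
    by apply/seteqP; split => lam [hl h]; split => // y; [move=> _|]; apply: h.
  apply: closedI.
    have -> : nonneg_rv (p:=p) = \bigcap_(i in [set: 'I_p])
        ((fun lam : 'rV[R]_p => lam 0 i) @^-1` [set r | 0 <= r]).
      by apply/seteqP; split => lam h i; [move=> _|]; apply: h.
    apply: closed_bigI => i _; apply: preimage_closed; last exact: closed_ge.
    by move=> l _; exact: coord_continuous.
  apply: closed_bigI => y _; apply: preimage_closed; last exact: closed_ge.
  by move=> l _; exact: lagr_cont.
have supE (phi : 'rV[R]_p -> \bar R) : (forall lam, nonneg_rv lam -> (phi lam <= v%:E)%E) ->
    (v%:E <= phi lam0)%E -> ereal_sup [set phi lam | lam in nonneg_rv (p:=p)] = v%:E.
  move=> h1 h2; apply/le_anti/andP; split.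
    by apply/ereal_supP => _ [lam hl <-]; exact: h1.
  by apply: le_trans h2 _; apply: ereal_sup_ubound; exists lam0.
rewrite (supE _ h_le) ?(supE _ psi_le) //; first by apply/psi_ge.
by apply: le_trans (psi_le_h lam0); apply/psi_ge.
Qed.
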